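(* Let $V \subset \mathbb{R}^D$ be a finite set of points in general position (all pairwise Euclidean distances distinct), with Euclidean distance $d$, and let $\alpha: V \to \mathbb{R}$ satisfy $\alpha(u) \ge 1$ for all $u \in V$. Let $E_{EMST}$ be the edge set of the Euclidean minimum spanning tree of $V$, let $E_{RNG}$ be the edge set of the relative neighborhood graph of $V$, and let $E_{MCGI}$ be the edge set of the graph $G_{MCGI}$ on $V$ defined below. Then $E_{EMST} \subseteq E_{RNG} \subseteq E_{MCGI}$, and consequently $G_{MCGI}$ is connected.
   Context: Relative neighborhood graph: $\{u,v\}$ (with $u \ne v$) is an edge of $E_{RNG}$ iff there is no witness $n \in V\setminus\{u,v\}$ with $d(n,v) \le d(u,v)$ and $d(n,u) \le d(u,v)$. MCGI graph (the paper's adaptive pruning rule): for $u \ne v$, the edge $(u,v)$ belongs to $E_{MCGI}$ iff it is not pruned, where $(u,v)$ is pruned iff there exists a witness $n \in V\setminus\{u,v\}$ with $d(n,u) \le d(u,v)$ (i.e. $n$ is no farther from $u$ than $v$) and $\alpha(u)\, d(n,v) \le d(u,v)$. An undirected edge $\{u,v\}$ is regarded as contained in $E_{MCGI}$ if $(u,v)$ or $(v,u)$ is in $E_{MCGI}$, and connectivity of $G_{MCGI}$ refers to the underlying undirected graph. *)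

(* Defs.v *)
From HB Require Import structures.
From mathcomp Require Import all_boot all_order all_algebra.
From mathcomp Require Import reals.
Set Implicit Arguments. Unset Strict Implicit. Unset Printing Implicit Defensive.
Import Order.TTheory GRing.Theory Num.Theory.
Local Open Scope ring_scope.

Section Defs.
Variables (R : realType) (D : nat) (T : finType) (p : T -> 'rV[R]_D).

Definition edist (x y : 'rV[R]_D) : R :=
  Num.sqrt (\sum_(i < D) (x ord0 i - y ord0 i) ^+ 2).

Definition d (u v : T) : R := edist (p u) (p v).

Definition general_position : Prop :=
  forall u v u' v' : T, u != v -> u' != v' -> d u v = d u' v' ->
    [set u; v] = [set u'; v'].

Definition adj (E : {set {set T}}) : rel T := fun x y => [set x; y] \in E.

Definition is_graph (E : {set {set T}}) : Prop := forall e, e \in E -> #|e| = 2.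

Definition connected_graph (E : {set {set T}}) : Prop :=
  forall x y : T, connect (adj E) x y.

Definition acyclic (E : {set {set T}}) : Prop :=
  ~ exists s : seq T, [/\ uniq s, 2 < size s & cycle (adj E) s]%N.

Definition spanning_tree (E : {set {set T}}) : Prop :=
  [/\ is_graph E, connected_graph E & acyclic E].

(* weight of an edge {u,v}: d(u,v) (= (d(u,v) + d(v,u)) / 2) *)
Definition edge_weight (e : {set T}) : R :=
  (\sum_(x in e) \sum_(y in e) d x y) / 2.

Definition weight (E : {set {set T}}) : R := \sum_(e in E) edge_weight e.

Definition is_EMST (E : {set {set T}}) : Prop :=
  spanning_tree E /\ forall E', spanning_tree E' -> weight E <= weight E'.

Definition rng_adj (u v : T) : bool :=
  (u != v) && ~~ [exists n, [&& n != u, n != v, d n v <= d u v & d n u <= d u v]].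

Definition E_RNG : {set {set T}} :=
  [set e | [exists u, exists v, (e == [set u; v]) && rng_adj u v]].

Definition pruned (alpha : T -> R) (u v : T) : bool :=
  [exists n, [&& n != u, n != v, d n u <= d u v & alpha u * d n v <= d u v]].

Definition mcgi_dir (alpha : T -> R) (u v : T) : bool :=
  (u != v) && ~~ pruned alpha u v.

Definition E_MCGI (alpha : T -> R) : {set {set T}} :=
  [set e | [exists u, exists v,
     (e == [set u; v]) && (mcgi_dir alpha u v || mcgi_dir alpha v u)]].

End Defs.

(* Main.v *)
Require Import Defs.
From HB Require Import structures.
From mathcomp Require Import all_boot all_order all_algebra.
From mathcomp Require Import reals.
From mathcomp Require Import lra.
From Stdlib Require Import Classical.
Import Order.TTheory GRing.Theory Num.Theory.
Local Open Scope ring_scope.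

Section Aux.
Variables (R : realType) (D : nat) (T : finType) (p : T -> 'rV[R]_D).

Lemma d_sym x y : d p x y = d p y x.
Proof.
rewrite /d /edist; congr Num.sqrt; apply: eq_bigr => i _.
by rewrite -sqrrN opprB.
Qed.

Lemma d_ge0 x y : 0 <= d p x y.
Proof. exact: sqrtr_ge0. Qed.

Lemma d_xx x : d p x x = 0.
Proof.
rewrite /d /edist big1 ?sqrtr0 // => i _; by rewrite subrr expr0n.
Qed.

Lemma ew2 u v : u != v -> edge_weight p [set u; v] = d p u v.
Proof.
move=> uv; rewrite /edge_weight big_setU1 ?in_set1 // big_set1.
rewrite !big_setU1 ?in_set1 // !big_set1 !d_xx (d_sym v u) /= add0r addr0; lra.
Qed.

Lemma ew_ge0 e : 0 <= edge_weight p e.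
Proof.
rewrite /edge_weight divr_ge0 // sumr_ge0 // => i _; rewrite sumr_ge0 // => j _.
exact: d_ge0.
Qed.

Lemma weight_sub (F E : {set {set T}}) : F \subset E -> weight p F <= weight p E.
Proof.
move=> sFE; rewrite /weight [X in _ <= X](big_setID F) /= (setIidPr sFE).
rewrite lerDl sumr_ge0 // => i _; exact: ew_ge0.
Qed.

Lemma adj_sym (E : {set {set T}}) : symmetric (adj E).
Proof. by move=> x y; rewrite /adj setUC. Qed.

Lemma connect_mono (E E' : {set {set T}}) : E \subset E' ->
  forall x y, connect (adj E) x y -> connect (adj E') x y.
Proof.
move=> sub; apply: connect_sub => x y h; apply: connect1.
by rewrite /adj (subsetP sub).
Qed.

Lemma reroute (E E' : {set {set T}}) a b :
  (forall x y, adj E x y -> [set x; y] != [set a; b] -> adj E' x y) ->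
  connect (adj E') a b ->
  forall x y, connect (adj E) x y -> connect (adj E') x y.
Proof.
move=> H cab; apply: connect_sub => x y exy.
case: (eqVneq [set x; y] [set a; b]) => [e|ne]; last by apply: connect1; apply: H.
have: x \in [set a; b] by rewrite -e set21.
have: y \in [set a; b] by rewrite -e set22.
rewrite !inE => /orP[]/eqP-> /orP[]/eqP->; rewrite ?connect0 //.
by rewrite (sym_connect_sym (@adj_sym E')).
Qed.

Lemma ne_set2l (S : {set T}) x y : x \notin S -> [set x; y] != S.
Proof. by move=> h; apply/eqP => e; move: h; rewrite -e set21. Qed.

Lemma ne_set2r (S : {set T}) x y : y \notin S -> [set x; y] != S.
Proof. by move=> h; apply/eqP => e; move: h; rewrite -e set22. Qed.

Lemma path_avoid (E : {set {set T}}) (S : {set T}) (l : seq T) (x z : T) : x \notin S ->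
  all (fun y => y \notin S) l -> path (adj E) x (rcons l z) ->
  connect (adj (E :\ S)) x z.
Proof.
elim: l x => [|y l IH] x xS /=.
  move=> _ /andP[h _]; apply: connect1; by rewrite /adj in_setD1 ne_set2l.
move=> /andP[yS al] /andP[h pl]; apply: connect_trans (IH y yS al pl).
apply: connect1; by rewrite /adj in_setD1 ne_set2l.
Qed.

Lemma cycle_edge (E : {set {set T}}) s : uniq s -> (2 < size s)%N ->
  cycle (adj E) s ->
  exists a b, [set a; b] \in E /\ connect (adj (E :\ [set a; b])) a b.
Proof.
case: s => [|a [|b [|t1 t]]] //= /andP[ha /andP[hb /andP[ht1 _]]] _.
move: ha hb; rewrite !inE !negb_or => /and3P[ab hat1 hat] /andP[bt1 hbt].
move=> /and3P[hab hbt1 pl]; exists a, b; split => //.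
rewrite (sym_connect_sym (@adj_sym _)).
have t1S : t1 \notin [set a; b] by rewrite !inE negb_or eq_sym hat1 eq_sym bt1.
have allt : all (fun y => y \notin [set a; b]) t.
  apply/allP => y yt; rewrite !inE negb_or; apply/andP; split.
    by apply: contraNneq hat => <-.
  by apply: contraNneq hbt => <-.
have c2 := @path_avoid E _ _ _ _ t1S allt pl.
apply: connect_trans c2.
apply: connect1; by rewrite /adj in_setD1 ne_set2r.
Qed.

Lemma sub_tree n (E : {set {set T}}) : (#|E| < n)%N -> is_graph E ->
  connected_graph E -> exists F : {set {set T}}, F \subset E /\ spanning_tree F.
Proof.
elim: n E => [//|n IH] E hE gE cE.
case: (classic (acyclic E)) => [aE|naE].
  by exists E; split => //; split.
have [s [us ss cs]] : exists s : seq T, [/\ uniq s, (2 < size s)%N & cycle (adj E) s].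
  by apply: NNPP.
have [a [b [abE cab]]] := @cycle_edge E s us ss cs.
have lt : (#|E :\ [set a; b]| < n)%N.
  by rewrite -ltnS (leq_trans _ hE) // (cardsD1 [set a; b] E) abE.
have gE1 : is_graph (E :\ [set a; b]).
  by move=> e; rewrite in_setD1 => /andP[_ /gE].
have cE1 : connected_graph (E :\ [set a; b]).
  move=> x y; apply: (@reroute E _ a b) => //.
  by move=> x' y' h ne; rewrite /adj in_setD1 ne.
have [F [sF tF]] := IH _ lt gE1 cE1.
exists F; split => //; apply: subset_trans sF _; exact: subsetDl.
Qed.

Lemma path_closed (e : rel T) (P : pred T) x l :
  (forall a b, e a b -> P a -> P b) -> P x -> P (last x l) \/ ~~ path e x l.
Proof.
move=> H; elim: l x => [|y l IH] x Px /=; first by left.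
case exy: (e x y) => /=; last by right.
exact: IH (H _ _ exy Px).
Qed.

Lemma strict_lt x y n : general_position p -> x != y -> n != x -> n != y ->
  d p n y <= d p x y -> d p n y < d p x y.
Proof.
move=> gp xy nx ny h; rewrite lt_neqAle h andbT; apply/eqP => e.
have := gp _ _ _ _ ny xy e => e'.
have : n \in [set x; y] by rewrite -e' set21.
by rewrite !inE (negbTE nx) (negbTE ny).
Qed.

Lemma emst_rng E : general_position p -> is_EMST p E -> E \subset E_RNG p.
Proof.
move=> gp [[gE cE aE] minE]; apply/subsetP => e eE.
have /cards2P[u [v [uv ee]]] : #|e| == 2 by rewrite gE.
subst e.
rewrite inE; apply/existsP; exists u; apply/existsP; exists v.
rewrite eqxx /= /rng_adj uv /=.
apply/negP => /existsP[n /and4P[nu nv dnv dnu]].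
have dnv' := strict_lt u v n gp uv nu nv dnv.
have dnu' : d p n u < d p u v.
  have vu : v != u by rewrite eq_sym.
  have h := strict_lt v u n gp vu nv nu; rewrite (d_sym v u) in h; exact: h.
set S := [set u; v]; set E0 := E :\ S.
pose P := fun x => connect (adj E0) u x || connect (adj E0) v x.
have cov : P n.
  have /connectP[l pl ->] := cE u n.
  have := @path_closed (adj E) P u l.
  case.
  - move=> a b eab /orP Pa.
    case: (eqVneq [set a; b] S) => [ee|ne].
      have : b \in S by rewrite -ee set22.
      by rewrite /P !inE => /orP[]/eqP->; rewrite connect0 ?orbT.
    have h : adj E0 a b by rewrite /adj in_setD1 ne.
    case: Pa => c; apply/orP; [left|right]; exact: connect_trans c (connect1 h).
  - by rewrite /P connect0.
  - done.
  - by rewrite pl.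
have [f [f2 fw cf]] : exists f : {set T}, [/\ #|f| = 2, edge_weight p f < d p u v &
    connect (adj (f |: E0)) u v].
  case/orP: cov => c.
  - exists [set n; v]; split.
    + by apply/eqP/cards2P; exists n, v.
    + by rewrite ew2.
    + apply: connect_trans (@connect_mono E0 _ (subsetUr _ _) _ _ c) _.
      by apply: connect1; rewrite /adj setU11.
  - exists [set u; n]; split.
    + by apply/eqP/cards2P; exists u, n; rewrite eq_sym.
    + by rewrite ew2 1?eq_sym // d_sym.
    + apply: (@connect_trans _ _ n u v).
        by apply: connect1; rewrite /adj setU11.
      apply: (@connect_mono E0 _ (subsetUr _ _)).
      by rewrite (sym_connect_sym (@adj_sym _)).
set E' := f |: E0.
have gE' : is_graph E'.
  by move=> e; rewrite in_setU1 => /orP[/eqP->|]// ; rewrite in_setD1 => /andP[_ /gE].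
have cE' : connected_graph E'.
  move=> x y; apply: (@reroute E _ u v) => //.
  by move=> x' y' h ne; move: h; rewrite /adj in_setU1 in_setD1 ne => ->; rewrite orbT.
have [F [sF tF]] := @sub_tree _ E' (ltnSn #|E'|) gE' cE'.
have h1 := minE F tF.
have h2 := @weight_sub F E' sF.
have h3 : weight p E' <= weight p E0 + edge_weight p f.
  case fE0 : (f \in E0).
    rewrite /E' (setUidPr _) ?sub1set // lerDl; exact: ew_ge0.
  by rewrite /weight big_setU1 /= ?fE0 // addrC.
have h4 : weight p E = edge_weight p S + weight p E0.
  by rewrite /weight (big_setD1 S) //.
rewrite /S ew2 // in h4.
lra.
Qed.

Lemma measure_lt a b x y : d p a b < d p x y ->
  (#|[set q : T * T | (d p q.1 q.2 < d p a b)%R]| <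
   #|[set q : T * T | (d p q.1 q.2 < d p x y)%R]|)%N.
Proof.
move=> H; apply: proper_card; apply/properP; split.
  by apply/subsetP => q; rewrite !inE => h; exact: lt_trans h H.
by exists (a, b); rewrite !inE ?ltxx.
Qed.

Lemma rng_conn : general_position p ->
  forall x y, connect (adj (E_RNG p)) x y.
Proof.
move=> gp x y.
have [k] := ubnP #|[set q : T * T | (d p q.1 q.2 < d p x y)%R]|.
elim: k x y => [//|k IH] x y hk.
case: (eqVneq x y) => [->|xy]; first exact: connect0.
case r: (rng_adj p x y).
  apply: connect1; rewrite /adj inE; apply/existsP; exists x; apply/existsP; exists y.
  by rewrite eqxx r.
move: r; rewrite /rng_adj xy /= => /negbFE /existsP[n /and4P[nx ny dny dnx]].
have dny' := strict_lt x y n gp xy nx ny dny.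
have dnx' : d p x n < d p x y.
  have yx : y != x by rewrite eq_sym.
  have dnx2 : d p n x <= d p y x by rewrite (d_sym y x).
  have h := strict_lt y x n gp yx ny nx dnx2; by rewrite (d_sym y x) (d_sym n x) in h.
have dny'' : d p n y < d p x y := dny'.
apply: (@connect_trans _ _ n x y); apply: IH.
  exact: leq_trans (measure_lt x n x y dnx') hk.
exact: leq_trans (measure_lt n y x y dny') hk.
Qed.

End Aux.

Theorem mainTheorem3 (R : realType) (D : nat) (T : finType)
  (p : T -> 'rV[R]_D) (alpha : T -> R) :
  injective p ->
  general_position p ->
  (forall u, 1 <= alpha u) ->
  (forall E_EMST, is_EMST p E_EMST -> E_EMST \subset E_RNG p) /\
  E_RNG p \subset E_MCGI p alpha /\
  connected_graph (E_MCGI p alpha).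
Proof.
move=> _ gp ha.
have sub : E_RNG p \subset E_MCGI p alpha.
  apply/subsetP => e; rewrite !inE => /existsP[u /existsP[v /andP[/eqP-> /andP[uv nw]]]].
  apply/existsP; exists u; apply/existsP; exists v; rewrite eqxx /mcgi_dir uv /=.
  apply/orP; left; apply/negP => /existsP[n /and4P[nu nv dnu adnv]].
  apply: (negP nw); apply/existsP; exists n; rewrite nu nv dnu /= andbT.
  apply: le_trans adnv; apply: ler_peMl => //; exact: d_ge0.
split; first by move=> E; exact: emst_rng.
split => // x y; apply: (@connect_mono T _ _ sub); exact: rng_conn.
Qed.
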